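(* Let $\bm{N}=(N_0,\ldots,N_{n-1},-\sum_iN_i)$ with each $N_i\in\mathbb{Z}_{\ge0}$. A weak composition $\bm{j}=(j_0,\ldots,j_{n-1})$ of $\binom n2$ belongs to $\mathcal{S}^+_n(\bm{N})$ if and only if $j_i\le N_i+n-i-1$ for $i=0,\ldots,n-1$ and $\sum_{i=0}^k j_i\ge\sum_{i=0}^k(n-1-i)$ for all $k=0,\ldots,n-1$.
   Context: For $\bm{M}=(M_0,\ldots,M_n)\in\mathbb{Z}^{n+1}$ with $\sum_iM_i=0$, $K_n(\bm{M})$ is the number of integer vectors $(f_{ij})_{0\le i<j\le n}\in\mathbb{Z}_{\ge0}^{\binom{n+1}{2}}$ with $\sum_{j>i} f_{ij}-\sum_{k<i} f_{ki}=M_i$ for all $i$. Let $\bm\delta=(n-1,n-2,\ldots,1,0)$. For a weak composition $\bm{j}$ of $\binom n2$ (nonnegative integers summing to $\binom n2$), $K_n(\bm{j}-\bm\delta)$ means $K_n(j_0-(n-1),j_1-(n-2),\ldots,j_{n-1}-0,0)$. $\mathcal{S}^+_n(\bm{N})$ is the set of weak compositions $\bm{j}$ of $\binom n2$ such that $\binom{N_0+n-1}{j_0}\binom{N_1+n-2}{j_1}\cdots\binom{N_{n-1}}{j_{n-1}}\cdot K_n(\bm{j}-\bm\delta)>0$. *)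

(* Defs.v *)
From mathcomp Require Import all_boot all_order all_algebra.
Set Implicit Arguments. Unset Strict Implicit. Unset Printing Implicit Defensive.
Import GRing.Theory Num.Theory.

Definition is_flow (n : nat) (M : 'I_n.+1 -> int)
    (f : 'I_n.+1 * 'I_n.+1 -> nat) : bool :=
  [forall p : 'I_n.+1 * 'I_n.+1, (f p != 0%N) ==> (p.1 < p.2)%N] &&
  [forall i : 'I_n.+1,
     ((\sum_(j : 'I_n.+1 | (i < j)%N) f (i, j))%:Z
      - (\sum_(k : 'I_n.+1 | (k < i)%N) f (k, i))%:Z == M i)%R].

(* Every flow entry is bounded by B(M) = sum_i |M_i| (acyclic flow
   decomposition), so counting flows with entries in [0, B(M)] counts all
   flows; this makes K_n(M) a finite cardinality. *)
Definition flow_bound (n : nat) (M : 'I_n.+1 -> int) : nat :=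
  \sum_(i : 'I_n.+1) `|M i|%N.

Definition Kostant (n : nat) (M : 'I_n.+1 -> int) : nat :=
  #|[set f : {ffun 'I_n.+1 * 'I_n.+1 -> 'I_(flow_bound M).+1}
       | is_flow M (fun p => nat_of_ord (f p))]|.

(* j - delta, extended by a final 0 coordinate:
   (j_0-(n-1), j_1-(n-2), ..., j_{n-1}-0, 0). *)
Definition j_minus_delta (n : nat) (j : 'I_n -> nat) : 'I_n.+1 -> int :=
  fun k => if unlift ord_max k is Some i
           then ((j i)%:Z - (n.-1 - i)%N%:Z)%R else 0%R.

(* S^+_n(N), with N given by its first n coordinates N_0..N_{n-1}
   (the last coordinate -sum N_i plays no role). *)
Definition in_Splus (n : nat) (N : 'I_n -> nat) (j : 'I_n -> nat) : bool :=
  (\sum_(i < n) j i == 'C(n, 2)) &&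
  (0 < (\prod_(i < n) 'C(N i + n - i - 1, j i)) * Kostant (j_minus_delta j))%N.

(* Main.v *)
Require Import Defs.
From mathcomp Require Import all_boot all_order all_algebra zify.
Import Order.TTheory GRing.Theory Num.Theory.
Set Implicit Arguments. Unset Strict Implicit.

Lemma PoszS (I : Type) (r : seq I) (P : pred I) (F : I -> nat) :
  Posz (\sum_(i <- r | P i) F i)%N = (\sum_(i <- r | P i) (F i)%:Z)%R.
Proof. by elim/big_rec2: _ => // i x y _ <-; rewrite PoszD. Qed.

Lemma sum_delta n : (\sum_(i < n) (n - 1 - i) = 'C(n, 2))%N.
Proof.
rewrite (reindex_inj rev_ord_inj) /= -bin2_sum big_mkord.
apply: eq_bigr => i _; have := ltn_ord i; lia.
Qed.

Lemma Mlt n (j : 'I_n -> nat) (t : 'I_n.+1) (ht : (t < n)%N) :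
  j_minus_delta j t = ((j (Ordinal ht))%:Z - (n.-1 - t)%N%:Z)%R.
Proof.
rewrite /j_minus_delta.
have ne : ord_max != t by rewrite neq_ltn ht orbT.
case: (unlift_some ne) => k ek ->.
have -> : k = Ordinal ht.
  apply: val_inj => /=; rewrite ek /= /bump.
  have := ltn_ord k; rewrite /=; move=> hk; rewrite leqNgt hk.
  by [].
by [].
Qed.

Lemma Mmax n (j : 'I_n -> nat) : j_minus_delta j ord_max = 0%R.
Proof. by rewrite /j_minus_delta unlift_none. Qed.

Definition Pm {n} (j : 'I_n -> nat) (m : nat) : int :=
  (\sum_(t < n.+1 | (t < m)%N) j_minus_delta j t)%R.

Lemma Pm_eq n (j : 'I_n -> nat) m :
  Pm j m = ((\sum_(i < n | (i < m)%N) j i)%N%:Z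
            - (\sum_(i < n | (i < m)%N) (n - 1 - i))%N%:Z)%R.
Proof.
rewrite /Pm big_mkcond big_ord_recr /= Mmax if_same addr0.
rewrite !PoszS -sumrN -big_split /= [RHS]big_mkcond /=.
apply: eq_bigr => i _.
have hi : (widen_ord (leqnSn n) i < n)%N by rewrite /= ltn_ord.
rewrite (Mlt j hi) /=.
case: ifP => _ //; congr (_ - _)%R.
  by congr (Posz (j _)); apply: val_inj.
by rewrite subn1.
Qed.

Lemma Pm0 n (j : 'I_n -> nat) : Pm j 0 = 0%R.
Proof. by rewrite /Pm big_pred0. Qed.

Lemma Pm_full n (j : 'I_n -> nat) m :
  (\sum_(i < n) j i = 'C(n, 2))%N -> (n < m)%N -> Pm j m = 0%R.
Proof.
move=> hs hm; rewrite Pm_eq.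
rewrite (eq_bigl xpredT) => [|i]; last by rewrite /= (leq_trans (ltn_ord i)) // ltnW.
rewrite [X in (_ - Posz X)%R](eq_bigl xpredT) => [|i]; last by rewrite /= (leq_trans (ltn_ord i)) // ltnW.
by rewrite hs sum_delta subrr.
Qed.

Lemma PmS n (j : 'I_n -> nat) (i : 'I_n.+1) :
  Pm j (val i).+1 = (Pm j i + j_minus_delta j i)%R.
Proof.
rewrite /Pm (bigD1 i) //= addrC; congr (_ + _)%R.
apply: eq_bigl => t; rewrite ltnS -val_eqE /=.
by rewrite ltn_neqAle andbC.
Qed.

Lemma Pm_nonneg n (j : 'I_n -> nat) :
  (\sum_(i < n) j i = 'C(n, 2))%N ->
  (forall k : 'I_n,
     (\sum_(i < n | (i <= k)%N) (n - 1 - i) <= \sum_(i < n | (i <= k)%N) j i)%N) ->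
  forall m, (0 <= Pm j m)%R.
Proof.
move=> hs hk m.
case: (ltnP n m) => hm; first by rewrite Pm_full.
case: m hm => [|m] hm; first by rewrite Pm0.
have e : forall F : 'I_n -> nat, (\sum_(i < n | (i < m.+1)%N) F i =
   \sum_(i < n | (i <= (Ordinal hm : 'I_n))%N) F i)%N.
  by move=> F; apply: eq_bigl => i; rewrite ltnS.
by rewrite Pm_eq !e subr_ge0 lez_nat hk.
Qed.

Theorem proposition6p4 (n : nat) (N : 'I_n -> nat) (j : 'I_n -> nat) :
  (\sum_(i < n) j i = 'C(n, 2))%N ->
  (in_Splus N j <->
     ((forall i : 'I_n, (j i <= N i + n - i - 1)%N) /\
      (forall k : 'I_n,
         (\sum_(i < n | (i <= k)%N) (n - 1 - i) <= \sum_(i < n | (i <= k)%N) j i)%N))).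
Proof.
move=> hs; split.
- case/andP => _; rewrite muln_gt0 => /andP [hp hk]; split.
  + move=> i; rewrite leqNgt; apply/negP => hlt; move: hp.
    by rewrite (bigD1 i) //= bin_small // mul0n.
  + move=> k; move: hk; rewrite card_gt0 => /set0Pn [F]; rewrite inE.
    case/andP => _ /forallP hf.
    have e : forall G : 'I_n -> nat, (\sum_(i < n | (i < k.+1)%N) G i =
        \sum_(i < n | (i <= k)%N) G i)%N.
      by move=> G; apply: eq_bigl => i; rewrite ltnS.
    suff : (0 <= Pm j k.+1)%R by rewrite Pm_eq !e subr_ge0 lez_nat.
    rewrite /Pm; under eq_bigr => t _ do rewrite -(eqP (hf t)).
    rewrite big_split /= sumrN -!PoszS subr_ge0 lez_nat.
    rewrite !pair_big_dep /=.
    have hinj : injective (fun p : 'I_n.+1 * 'I_n.+1 => (p.2, p.1)).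
      by move=> [a b] [c d] /= [-> ->].
    rewrite (reindex_inj hinj) /=.
    rewrite [X in (_ <= X)%N](bigID (fun p : 'I_n.+1 * 'I_n.+1 => (p.2 < k.+1)%N)) /=.
    apply: leq_trans (leq_addr _ _); rewrite leq_eqVlt; apply/orP; left; apply/eqP.
    apply: eq_bigl => p /=; case: p => a b /=.
    apply/idP/idP.
      by case/andP => h1 h2; rewrite h1 h2 (ltn_trans h2 h1).
    by case/andP => /andP [h1 h2] h3; rewrite h2 h3.
- move=> [hb hpre].
  have Pnn := Pm_nonneg hs hpre.
  rewrite /in_Splus hs eqxx /= muln_gt0; apply/andP; split.
    by apply: prodn_gt0 => i; rewrite bin_gt0 hb.
  set M := j_minus_delta j.
  pose g (p : 'I_n.+1 * 'I_n.+1) : nat :=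
    if val p.2 == (val p.1).+1 then `|Pm j p.2|%N else 0%N.
  have gb : forall p, (g p <= flow_bound M)%N.
    move=> p; rewrite /g; case: eqP => // _.
    rewrite -lez_nat abszE /flow_bound PoszS.
    apply: le_trans (ler_norm_sum _ _ _) _.
    under [X in (_ <= X)%R]eq_bigr => t _ do rewrite abszE.
    rewrite [X in (_ <= X)%R](bigID (fun t : 'I_n.+1 => (t < p.2)%N)) /=.
    by rewrite lerDl sumr_ge0 // => t _; rewrite normr_ge0.
  pose F := [ffun p => (inord (g p) : 'I_(flow_bound M).+1)].
  have FE : forall p, nat_of_ord (F p) = g p.
    by move=> p; rewrite ffunE inordK // ltnS gb.
  rewrite card_gt0; apply/set0Pn; exists F; rewrite inE; apply/andP; split.
    apply/forallP => p; apply/implyP; rewrite FE /g; case: (val p.2 =P (val p.1).+1) => [e _|_].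
      by rewrite e.
    by rewrite eqxx.
  apply/forallP => i.
  have out : (\sum_(b : 'I_n.+1 | (i < b)%N) F (i, b))%N = `|Pm j i.+1|%N.
    under eq_bigr => b _ do rewrite FE.
    rewrite /g /=; case: (ltnP i n) => hi.
      rewrite (bigD1 (Ordinal (hi : (i.+1 < n.+1)%N))) /=; last by rewrite ltnSn.
      rewrite eqxx big1 ?addn0 // => b /andP [_ hb0]; case: eqP => // e.
      by exfalso; move/eqP: hb0; apply; apply: val_inj => /=; exact: e.
    rewrite big1; first by rewrite Pm_full.
    by move=> b _; case: eqP => // e; have := ltn_ord b; rewrite e; lia.
  have inn : (\sum_(a : 'I_n.+1 | (a < i)%N) F (a, i))%N = `|Pm j i|%N.
    under eq_bigr => a _ do rewrite FE.
    rewrite /g /=; case: (posnP i) => hi.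
      by rewrite big1 ?hi ?Pm0 // => a; rewrite hi ltn0.
    have ha0 : (i.-1 < n.+1)%N by rewrite (leq_ltn_trans (leq_pred i)) // ltn_ord.
    rewrite (bigD1 (Ordinal ha0)) /=; last by rewrite ltn_predL.
    rewrite prednK // eqxx big1 ?addn0 // => a /andP [_ ha]; case: eqP => // e.
    by exfalso; move/eqP: ha; apply; apply: val_inj => /=; lia.
  by rewrite out inn !gez0_abs // PmS addrAC subrr add0r.
Qed.
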